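(* Let $D$ be a Dedekind domain and let $M$ be a nonzero finitely generated multiplication $D$-module. Then $M$ is isomorphic to a nonzero ideal of $D$ (e.g. $D$ itself) or to $D/I$ for some nonzero ideal $I$ of $D$.
   Context: All rings are commutative with $1$ and all modules are unital. An $R$-module $M$ is a multiplication module if every submodule of $M$ equals $IM$ for some ideal $I$ of $R$. *)

(* Defs.v *)
From HB Require Import structures.
From mathcomp Require Import all_boot all_order all_algebra.
From mathcomp Require Import fraction.
Set Implicit Arguments. Unset Strict Implicit. Unset Printing Implicit Defensive.
Import Order.TTheory GRing.Theory Num.Theory.
Local Open Scope ring_scope.

Definition is_ideal (R : comNzRingType) (I : R -> Prop) : Prop :=
  [/\ I 0, (forall a b, I a -> I b -> I (a + b)) &
      (forall r a, I a -> I (r * a))].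

Definition is_prime_ideal (R : comNzRingType) (P : R -> Prop) : Prop :=
  [/\ is_ideal P, ~ P 1 & forall a b, P (a * b) -> P a \/ P b].

Definition is_maximal_ideal (R : comNzRingType) (P : R -> Prop) : Prop :=
  [/\ is_ideal P, ~ P 1 &
      forall J : R -> Prop, is_ideal J -> (forall x, P x -> J x) ->
        (forall x, J x <-> P x) \/ J 1].

Definition nonzero_ideal (R : comNzRingType) (I : R -> Prop) : Prop :=
  is_ideal I /\ exists a, I a /\ a != 0.

Definition noetherian (R : comNzRingType) : Prop :=
  forall I : R -> Prop, is_ideal I ->
    exists s : seq R, forall x,
      I x <-> exists c : 'I_(size s) -> R, x = \sum_(i < size s) c i * s`_i.

Definition dim_le1 (R : comNzRingType) : Prop :=
  forall P : R -> Prop, is_prime_ideal P -> (exists a, P a /\ a != 0) ->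
    is_maximal_ideal P.

Definition integrally_closed (D : idomainType) : Prop :=
  forall x : {fraction D},
    (exists p : {poly D}, p \is monic /\ (map_poly (@tofrac D) p).[x] = 0) ->
    exists a : D, x = @tofrac D a.

Definition dedekind_domain (D : idomainType) : Prop :=
  [/\ noetherian D, integrally_closed D & dim_le1 D].

Definition is_submodule (R : comNzRingType) (M : lmodType R) (N : M -> Prop) :=
  [/\ N 0, (forall x y, N x -> N y -> N (x + y)) &
      (forall r x, N x -> N (r *: x))].

Definition ideal_times_module (R : comNzRingType) (M : lmodType R)
    (I : R -> Prop) : M -> Prop :=
  fun x => exists (n : nat) (r : 'I_n -> R) (m : 'I_n -> M),
    (forall i, I (r i)) /\ x = \sum_(i < n) r i *: m i.

Definition multiplication_module (R : comNzRingType) (M : lmodType R) : Prop :=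
  forall N : M -> Prop, is_submodule N ->
    exists I : R -> Prop, is_ideal I /\
      forall x, N x <-> ideal_times_module I x.

Definition finitely_generated (R : comNzRingType) (M : lmodType R) : Prop :=
  exists s : seq M, forall x : M,
    exists c : 'I_(size s) -> R, x = \sum_(i < size s) c i *: s`_i.

Definition nonzero_module (R : comNzRingType) (M : lmodType R) : Prop :=
  exists x : M, x != 0.

Definition iso_to_ideal (R : comNzRingType) (M : lmodType R) (J : R -> Prop) :=
  exists f : M -> R,
    [/\ forall r x y, f (r *: x + y) = r * f x + f y,
        injective f &
        forall a, J a <-> exists x, f x = a].

(* M is isomorphic to R/I: there is a surjective R-linear map R -> M with
   kernel exactly I (first isomorphism theorem). *)
Definition iso_to_quotient (R : comNzRingType) (M : lmodType R) (I : R -> Prop) :=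
  exists f : R -> M,
    [/\ forall r a b, f (r * a + b) = r *: f a + f b,
        (forall x : M, exists a, f a = x) &
        forall a, f a = 0 <-> I a].

(* Main.v *)
Require Import Defs.
From mathcomp Require Import all_boot all_order all_algebra.
From mathcomp Require Import ring.
From Stdlib Require Import Classical ClassicalEpsilon FunctionalExtensionality PropExtensionality.
From Stdlib Require List.
Set Implicit Arguments. Unset Strict Implicit. Unset Printing Implicit Defensive.
Import GRing.Theory.
Local Open Scope ring_scope.


Lemma IM_single (R : comNzRingType) (M : lmodType R) (I : R -> Prop) r z :
  I r -> ideal_times_module (M:=M) I (r *: z).
Proof.
move=> Ir; exists 1%N, (fun _ => r), (fun _ => z); split => //.
by rewrite big_ord1.
Qed.

Lemma IM_add (R : comNzRingType) (M : lmodType R) (I : R -> Prop) (x y : M) :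
  ideal_times_module I x -> ideal_times_module I y ->
  ideal_times_module I (x + y).
Proof.
move=> [n1 [r1 [m1 [H1 ->]]]] [n2 [r2 [m2 [H2 ->]]]].
exists (n1 + n2)%N,
  (fun i => match split i with inl j => r1 j | inr j => r2 j end),
  (fun i => match split i with inl j => m1 j | inr j => m2 j end).
split.
  by move=> i; case: (split i).
rewrite big_split_ord /=; congr (_ + _); apply: eq_bigr => i _.
  by have /= -> := unsplitK (inl i : 'I_n1 + 'I_n2).
by have /= -> := unsplitK (inr i : 'I_n1 + 'I_n2).
Qed.

Lemma IM_scale (R : comNzRingType) (M : lmodType R) (I : R -> Prop) (x : M) c :
  is_ideal I -> ideal_times_module I x -> ideal_times_module I (c *: x).
Proof.
move=> [_ _ HI] [n [r [m [H ->]]]].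
exists n, (fun i => c * r i), m; split; first by move=> i; apply: HI.
by rewrite scaler_sumr; apply: eq_bigr => i _; rewrite scalerA.
Qed.

Lemma IM_sub (R : comNzRingType) (M : lmodType R) (I : R -> Prop) (x y : M) :
  is_ideal I -> ideal_times_module I x -> ideal_times_module I y ->
  ideal_times_module I (x - y).
Proof.
move=> HI Hx Hy; apply: IM_add => //.
by rewrite -scaleN1r; apply: IM_scale.
Qed.

Lemma IM_mono (R : comNzRingType) (M : lmodType R) (I J : R -> Prop) (x : M) :
  (forall a, I a -> J a) -> ideal_times_module I x -> ideal_times_module J x.
Proof.
move=> IJ [n [r [m [H ->]]]]; exists n, r, m; split => // i; exact: IJ.
Qed.

Lemma IM0 (R : comNzRingType) (M : lmodType R) (I : R -> Prop) :
  is_ideal I -> ideal_times_module (M:=M) I 0.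
Proof. by move=> [H0 _ _]; rewrite -(scale0r (0 : M)); apply: IM_single. Qed.

Lemma sum_closed (V : zmodType) (P : V -> Prop) n (F : 'I_n -> V) :
  P 0 -> (forall x y, P x -> P y -> P (x + y)) -> (forall i, P (F i)) ->
  P (\sum_(i < n) F i).
Proof.
move=> P0 PD PF; elim/big_rec: _ => // i x _ Px; exact: PD.
Qed.

Lemma ideal_sum (R : comNzRingType) (I : R -> Prop) n (F : 'I_n -> R) :
  is_ideal I -> (forall i, I (F i)) -> I (\sum_(i < n) F i).
Proof. by move=> [H0 HD _] HF; apply: sum_closed. Qed.

Lemma ideal_mulr (R : comNzRingType) (I : R -> Prop) a r :
  is_ideal I -> I a -> I (a * r).
Proof. by move=> [_ _ HM] Ha; rewrite mulrC; apply: HM. Qed.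

Lemma ideal_opp (R : comNzRingType) (I : R -> Prop) a :
  is_ideal I -> I a -> I (- a).
Proof. by move=> [_ _ HM] Ha; rewrite -mulN1r; apply: HM. Qed.

Lemma ideal_sub (R : comNzRingType) (I : R -> Prop) a b :
  is_ideal I -> I a -> I b -> I (a - b).
Proof. by move=> HI Ha Hb; case: (HI) => _ HD _; apply: HD => //; apply: ideal_opp. Qed.

Definition adjI (R : comNzRingType) (B : R -> Prop) (a : R) : R -> Prop :=
  fun x => exists b r, B b /\ x = b + r * a.

Lemma adjI_ideal (R : comNzRingType) (B : R -> Prop) a :
  is_ideal B -> is_ideal (adjI B a).
Proof.
move=> HB; case: (HB) => B0 BD BM; split.
- by exists 0, 0; split => //; rewrite mul0r addr0.
- move=> x y [b1 [r1 [H1 ->]]] [b2 [r2 [H2 ->]]].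
  exists (b1 + b2), (r1 + r2); split; [exact: BD | ring].
- move=> r x [b1 [r1 [H1 ->]]]; exists (r * b1), (r * r1); split; [exact: BM | ring].
Qed.

Lemma adjI_sub (R : comNzRingType) (B : R -> Prop) a x : B x -> adjI B a x.
Proof. by move=> Bx; exists x, 0; rewrite mul0r addr0. Qed.

Lemma adjI_a (R : comNzRingType) (B : R -> Prop) a : is_ideal B -> adjI B a a.
Proof. by case=> B0 _ _; exists 0, 1; rewrite mul1r add0r. Qed.

Lemma max_inv (R : comNzRingType) (P : R -> Prop) e :
  is_maximal_ideal P -> ~ P e -> exists r, P (1 - r * e).
Proof.
move=> [HP P1 HM] Pe.
case: (HM (adjI P e) (adjI_ideal e HP) (fun x => @adjI_sub _ P e x)) => [H|[b [r [Pb E]]]].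
  by exfalso; apply: Pe; apply/H; apply: adjI_a.
by exists r; have -> : 1 - r * e = b by rewrite E; ring.
Qed.

Lemma max_prime (R : comNzRingType) (P : R -> Prop) :
  is_maximal_ideal P -> is_prime_ideal P.
Proof.
move=> HPm; have [HP P1 _] := HPm; split => // a b Pab.
case: (classic (P a)) => Pa; [by left | right].
have [r Hr] := max_inv HPm Pa.
have -> : b = (1 - r * a) * b + r * (a * b) by ring.
have [_ HD HM] := HP; apply: HD; [exact: ideal_mulr HP Hr | exact: HM].
Qed.

Lemma noeth_ind (R : comNzRingType) (Phi : (R -> Prop) -> Prop) :
  noetherian R ->
  (forall B, is_ideal B ->
     (forall B', is_ideal B' -> (forall x, B x -> B' x) -> (exists x, B' x /\ ~ B x) -> Phi B') ->
     Phi B) ->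
  forall B, is_ideal B -> Phi B.
Proof.
move=> HN Hind B0 HB0; apply: NNPP => nPhi0.
pose C := {B : R -> Prop | is_ideal B /\ ~ Phi B}.
have step : forall c : C, {c' : C | (forall x, sval c x -> sval c' x) /\
                                     exists x, sval c' x /\ ~ sval c x}.
  move=> [B [HB nB]]; apply: constructive_indefinite_description.
  apply: NNPP => H; apply nB; apply: Hind => // B' HB' sub str.
  apply: NNPP => nB'; apply: H.
  by exists (exist _ B' (conj HB' nB')).
pose next c := sval (step c).
pose c0 : C := exist _ B0 (conj HB0 nPhi0).
pose ch n := sval (iter n next c0).
have chS n x : ch n x -> ch n.+1 x.
  by move=> H; rewrite /ch /= /next; case: (step _) => c' [H1 _] /=; apply: H1.
have chmono m n x : (m <= n)%N -> ch m x -> ch n x.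
  move=> /subnK <-; elim: (n - m)%N => [//|k IH] H; rewrite addSn; apply: chS; exact: IH.
have chI n : is_ideal (ch n).
  exact: (proj1 (svalP (iter n next c0))).
pose U x := exists n, ch n x.
have HU : is_ideal U.
  split.
  - by exists 0%N; case: (chI 0%N).
  - move=> x y [n Hx] [m Hy]; exists (maxn n m); case: (chI (maxn n m)) => _ HD _.
    by apply: HD; [apply: (chmono n) => //; rewrite leq_maxl | apply: (chmono m) => //; rewrite leq_maxr].
  - by move=> r x [n Hx]; exists n; case: (chI n) => _ _ HM; apply: HM.
have [s Hs] := HN U HU.
have sU : forall y, y \in s -> U y.
  move=> y /(nthP 0) [i lti <-]; apply/Hs.
  exists (fun j : 'I_(size s) => if nat_of_ord j == i then 1 else 0).
  rewrite (bigD1 (Ordinal lti)) //= eqxx mul1r big1 ?addr0 // => j.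
  by rewrite -val_eqE /= => /negbTE ->; rewrite mul0r.
have [N HN'] : exists N, forall y, y \in s -> ch N y.
  elim: s {Hs} sU => [|y s IH] H; first by exists 0%N.
  have [n Hn] := H y (mem_head _ _).
  have [m Hm] := IH (fun z hz => H z (mem_behead (s:=y::s) hz)).
  exists (maxn n m) => z; rewrite in_cons => /orP [/eqP -> | hz].
    by apply: (chmono n) => //; rewrite leq_maxl.
  by apply: (chmono m); [rewrite leq_maxr | apply: Hm].
have UN : forall x, U x -> ch N x.
  move=> x /Hs [c ->]; apply: ideal_sum => // i.
  by case: (chI N) => _ _ HM; apply: HM; apply: HN'; apply: mem_nth.
have : exists x, ch N.+1 x /\ ~ ch N x.
  exact: (proj2 (svalP (step (iter N next c0)))).
by move=> [x [Hx nHx]]; apply: nHx; apply: UN; exists N.+1.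
Qed.

Definition cover_prop (R : comNzRingType) (B : R -> Prop) :=
  exists L : list (R -> Prop),
    [/\ (forall P, List.In P L -> is_prime_ideal P /\ forall x, B x -> P x),
        (forall Q, is_prime_ideal Q -> (forall x, B x -> Q x) ->
           exists P, List.In P L /\ forall x, P x -> Q x) &
        (~ B 1 -> exists P, List.In P L)].

Lemma prime_cover (R : comNzRingType) : noetherian R ->
  forall B : R -> Prop, is_ideal B -> cover_prop B.
Proof.
move=> HN; apply: (@noeth_ind R (@cover_prop R)) => // B HB IH.
case: (classic (B 1)) => B1.
  exists nil; split => //= Q [_ Q1 _] sub; exfalso; exact: Q1 (sub _ B1).
case: (classic (is_prime_ideal B)) => PB.
  exists (B :: nil); split => /=.
  - by move=> P [<-|[]].
  - by move=> Q _ sub; exists B; split; [left|].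
  - by move=> _; exists B; left.
have [a [b [Bab [Ba Bb]]]] : exists a b, B (a * b) /\ ~ B a /\ ~ B b.
  apply: NNPP => H; apply: PB; split => // a b Bab.
  apply: NNPP => H'; apply: H; exists a, b; split => //.
  by split => Hx; apply: H'; [left|right].
have [L1 [C11 C12 C13]] : cover_prop (adjI B a).
  apply: IH; [exact: adjI_ideal | exact: adjI_sub | exists a; split => //; exact: adjI_a].
have [L2 [C21 C22 C23]] : cover_prop (adjI B b).
  apply: IH; [exact: adjI_ideal | exact: adjI_sub | exists b; split => //; exact: adjI_a].
exists (L1 ++ L2); split.
- move=> P /List.in_app_iff [H|H].
    by have [H1 H2] := C11 P H; split => // x Bx; apply: H2; apply: adjI_sub.
  by have [H1 H2] := C21 P H; split => // x Bx; apply: H2; apply: adjI_sub.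
- move=> Q HQ sub; have [IQ _ HQp] := HQ.
  case: (HQp a b (sub _ Bab)) => Qx.
    have [P [H1 H2]] : exists P, List.In P L1 /\ forall x, P x -> Q x.
      apply: C12 => //; move=> x [b' [r [Bb' ->]]]; case: IQ => _ HD HM.
      by apply: HD; [apply: sub | apply: HM].
    by exists P; split => //; apply/List.in_app_iff; left.
  have [P [H1 H2]] : exists P, List.In P L2 /\ forall x, P x -> Q x.
    apply: C22 => //; move=> x [b' [r [Bb' ->]]]; case: IQ => _ HD HM.
    by apply: HD; [apply: sub | apply: HM].
  by exists P; split => //; apply/List.in_app_iff; right.
- move=> _; case: (classic (adjI B a 1)) => Ha.
    case: (classic (adjI B b 1)) => Hb.
      exfalso; apply: B1.
      move: Ha Hb => [x [r [Bx E1]]] [y [s [By E2]]].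
      have -> : (1 : R) = (x + r * a) * (y + s * b) by rewrite -E1 -E2 mulr1.
      have -> : (x + r * a) * (y + s * b) = x * (y + s * b) + (r * (a * y) + r * s * (a * b)) by ring.
      case: HB => _ HD HM; apply: (HD); first by rewrite mulrC; apply: (HM).
      apply: (HD); apply: (HM) => //; exact: HM.
    by have [P HP] := C23 Hb; exists P; apply/List.in_app_iff; right.
  by have [P HP] := C13 Ha; exists P; apply/List.in_app_iff; left.
Qed.

Definition cyc (R : comNzRingType) (M : lmodType R) (t : M) : M -> Prop :=
  fun y => exists r, y = r *: t.

Lemma cyc_sub (R : comNzRingType) (M : lmodType R) (t : M) : is_submodule (cyc t).
Proof.
split.
- by exists 0; rewrite scale0r.
- by move=> x y [r ->] [s ->]; exists (r + s); rewrite scalerDl.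
- by move=> r x [s ->]; exists (r * s); rewrite scalerA.
Qed.

Lemma mult_cyc (R : comNzRingType) (M : lmodType R) (t : M) :
  multiplication_module M ->
  exists I, is_ideal I /\ forall y, cyc t y <-> ideal_times_module I y.
Proof. by move=> HM; apply: HM; apply: cyc_sub. Qed.

Lemma IM_nz (R : comNzRingType) (M : lmodType R) (I : R -> Prop) (t : M) :
  t != 0 -> ideal_times_module I t -> exists i, I i /\ i != 0.
Proof.
move=> tn [n [r [m [H E]]]]; apply: NNPP => C; move/negP: tn; apply.
rewrite E big1 // => i _.
have -> : r i = 0 by apply: NNPP => ri; apply: C; exists (r i); split => //; apply/eqP.
by rewrite scale0r.
Qed.

Lemma scale_inj (D : idomainType) (M : lmodType D) (x : M) r s :
  (forall a, a *: x = 0 -> a = 0) -> r *: x = s *: x -> r = s.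
Proof. by move=> tf E; apply/eqP; rewrite -subr_eq0; apply/eqP/tf; rewrite scalerBl E subrr. Qed.

Lemma tf_case (D : idomainType) (M : lmodType D) (x : M) :
  multiplication_module M -> (forall a, a *: x = 0 -> a = 0) ->
  exists J, nonzero_ideal J /\ iso_to_ideal M J.
Proof.
move=> HM tfx.
have tf : forall (a : D) (m : M), a != 0 -> a *: m = 0 -> m = 0.
  move=> a m an am; apply: NNPP => mn.
  have [I [HI HIc]] := mult_cyc m HM.
  have [i0 [Ii0 i0n]] : exists i, I i /\ i != 0.
    by apply: (IM_nz (t:=m)); [apply/eqP | apply/HIc; exists 1; rewrite scale1r].
  have [r Er] : cyc m (i0 *: x) by apply/HIc; apply: IM_single.
  have : (a * i0) *: x = 0 by rewrite -scalerA Er scalerA mulrC -scalerA am scaler0.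
  by move/tfx/eqP; rewrite mulf_eq0 (negbTE an) (negbTE i0n).
have xn : x != 0.
  apply/eqP => x0; have := tfx 1; rewrite x0 scaler0 => /(_ erefl) /eqP; by rewrite oner_eq0.
have [I [HI HIc]] := mult_cyc x HM.
have [i0 [Ii0 i0n]] : exists i, I i /\ i != 0.
  by apply: (IM_nz xn); apply/HIc; exists 1; rewrite scale1r.
have Hm : forall m : M, exists r, i0 *: m = r *: x.
  move=> m; have [r Er] : cyc x (i0 *: m) by apply/HIc; apply: IM_single.
  by exists r.
pose f m := proj1_sig (constructive_indefinite_description _ (Hm m)).
have fP m : i0 *: m = f m *: x.
  exact: (proj2_sig (constructive_indefinite_description _ (Hm m))).
have flin : forall r a b, f (r *: a + b) = r * f a + f b.
  move=> r a b; apply: (scale_inj tfx).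
  by rewrite -fP scalerDr scalerA mulrC -scalerA fP scalerDl scalerA fP.
exists (fun a => exists y, f y = a); split; last first.
  exists f; split; [exact: flin | | by move=> a; split].
  move=> a b E; apply/eqP; rewrite -subr_eq0; apply/eqP; apply: (tf i0) => //.
  by rewrite scalerBr !fP E subrr.
split; last by exists i0; split => //; exists x; apply: (scale_inj tfx); rewrite -fP.
split.
- by exists 0; apply: (scale_inj tfx); rewrite -fP scaler0 scale0r.
- by move=> a b [y <-] [z <-]; exists (y + z); rewrite -[y]scale1r flin mul1r scale1r.
- move=> r a [y <-]; exists (r *: y).
  have f0 : f 0 = 0 by apply: (scale_inj tfx); rewrite -fP scaler0 scale0r.
  by rewrite -[r *: y]addr0 flin f0 addr0.
Qed.

Lemma kill_gen (R : comNzRingType) (M : lmodType R) (s : seq M) (u : R) :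
  (forall x : M, exists c : 'I_(size s) -> R, x = \sum_(i < size s) c i *: s`_i) ->
  (forall y, y \in s -> u *: y = 0) -> forall m : M, u *: m = 0.
Proof.
move=> Hs Hu m; have [c ->] := Hs m.
rewrite scaler_sumr big1 // => i _; rewrite scalerA mulrC -scalerA Hu ?scaler0 //.
exact: mem_nth.
Qed.

Lemma self_mult (R : comNzRingType) (M : lmodType R) (P : R -> Prop) :
  multiplication_module M -> is_ideal P -> (forall x : M, ideal_times_module P x) ->
  forall m : M, exists p, P p /\ m = p *: m.
Proof.
move=> HM HP PM m.
have [I [HI HIc]] := mult_cyc m HM.
have [n [r [z [Ir E]]]] : ideal_times_module I m by apply/HIc; exists 1; rewrite scale1r.
pose T (y : M) := exists p, P p /\ y = p *: m.
have T0 : T 0 by exists 0; case: HP => ? _ _; split => //; rewrite scale0r.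
have TD : forall x y, T x -> T y -> T (x + y).
  move=> x y [p [Pp ->]] [q [Pq ->]]; exists (p + q); rewrite scalerDl; split => //.
  by case: HP => _ HD _; apply: HD.
suff : T m by [].
rewrite E; apply: sum_closed => // k.
have [n' [q [w [Pq ->]]]] := PM (z k).
rewrite scaler_sumr; apply: sum_closed => // l.
have [c Ec] : cyc m (r k *: w l) by apply/HIc; apply: IM_single.
exists (q l * c); split; first exact: ideal_mulr.
by rewrite scalerA [r k * _]mulrC -[(q l * r k) *: _]scalerA Ec scalerA.
Qed.

Lemma kill_list (R : comNzRingType) (M : lmodType R) (P : R -> Prop) (l : seq M) :
  is_ideal P -> (forall m : M, exists p, P p /\ m = p *: m) ->
  exists u, P (1 - u) /\ forall y, y \in l -> u *: y = 0.
Proof.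
move=> HP Hm; elim: l => [|y l [u [Pu Hu]]].
  by exists 1; rewrite subrr; case: HP.
have [p [Pp Ep]] := Hm y.
exists ((1 - p) * u); split.
  have -> : 1 - (1 - p) * u = (1 - u) + p * u by ring.
  by have [_ HD _] := HP; apply: HD => //; apply: ideal_mulr.
move=> z; rewrite in_cons => /orP [/eqP -> | hz].
  by rewrite mulrC -scalerA scalerBl scale1r -Ep subrr scaler0.
by rewrite -scalerA Hu ?scaler0.
Qed.

Lemma nak (R : comNzRingType) (M : lmodType R) (P : R -> Prop) (s : seq M) :
  multiplication_module M -> is_prime_ideal P ->
  (forall x : M, exists c : 'I_(size s) -> R, x = \sum_(i < size s) c i *: s`_i) ->
  (forall r, (forall m : M, r *: m = 0) -> P r) ->
  exists x : M, ~ ideal_times_module P x.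
Proof.
move=> HM [HP P1 _] Hs HA; apply: NNPP => C.
have PM : forall x : M, ideal_times_module P x.
  by move=> x; apply: NNPP => H; apply: C; exists x.
have [u [Pu Hu]] := kill_list s HP (self_mult HM HP PM).
have Pu' : P u by apply: HA; apply: (kill_gen Hs).
apply: P1; have -> : (1 : R) = (1 - u) + u by ring.
by case: HP => _ HD _; apply: HD.
Qed.

Lemma ideal_ext (R : comNzRingType) (P Q : R -> Prop) :
  (forall x, P x <-> Q x) -> P = Q.
Proof.
move=> H; apply: functional_extensionality => x; apply: propositional_extensionality; exact: H.
Qed.

Lemma sep (R : comNzRingType) (P : R -> Prop) (L : list (R -> Prop)) :
  is_maximal_ideal P ->
  (forall Q, List.In Q L -> is_maximal_ideal Q /\ Q <> P) ->
  exists e, ~ P e /\ forall Q, List.In Q L -> Q e.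
Proof.
move=> HPm; elim: L => [|Q L IH] HL.
  by exists 1; case: HPm.
have [e [Pe He]] := IH (fun Q' h => HL Q' (or_intror h)).
have [HQm QP] := HL Q (or_introl erefl).
have [q [Qq Pq]] : exists q, Q q /\ ~ P q.
  apply: NNPP => C; apply: QP.
  have [_ _ HQmax] := HQm; have [HP P1 _] := HPm.
  case: (HQmax P HP) => [x Qx|H|//].
    by apply: NNPP => Px; apply: C; exists x.
  by apply: ideal_ext => x; split => /H.
exists (q * e); split.
  by have [_ _ Hpr] := max_prime HPm; move=> /Hpr [].

move=> Q' /= [<-|h].
  by apply: ideal_mulr => //; case: HQm.
have [HQm' _] := HL Q' (or_intror h). case: HQm' => [[_ _ HM'] _ _]. apply: HM'; exact: He.
Qed.

Lemma gcons (R : comNzRingType) (M : lmodType R) (L : list (R -> Prop)) :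
  (forall P, List.In P L -> is_maximal_ideal P /\ exists x : M, ~ ideal_times_module P x) ->
  exists g : M, forall P, List.In P L -> ~ ideal_times_module P g.
Proof.
elim: L => [|P L IH] HL; first by exists 0.
have [g Hg] := IH (fun Q h => HL Q (or_intror h)).
have [HPm [x Hx]] := HL P (or_introl erefl).
have HP : is_ideal P by case: HPm.
case: (classic (List.In P L)) => PL.
  by exists g => Q /= [<-|h]; apply: Hg.
case: (classic (ideal_times_module P g)) => Pg; last first.
  by exists g => Q /= [<-|h] //; apply: Hg.
have [e [Pe He]] : exists e, ~ P e /\ forall Q, List.In Q L -> Q e.
  apply: sep => // Q h; split; first by case: (HL Q (or_intror h)).
  by move=> E; apply: PL; rewrite -E.
exists (g + e *: x) => Q /= [<-|h].
  move=> Pg'; apply: Hx.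
  have Pex : ideal_times_module P (e *: x).
    have -> : e *: x = (g + e *: x) - g by rewrite [g + _]addrC addrK.
    exact: IM_sub.
  have [r Hr] := max_inv HPm Pe.
  have -> : x = r *: (e *: x) + (1 - r * e) *: x.
    by rewrite scalerA -scalerDl addrC subrK scale1r.
  by apply: IM_add; [apply: IM_scale | apply: IM_single].
move=> Qg'; apply: (Hg Q h).
have HQ : is_ideal Q by case: (HL Q (or_intror h)) => [[]].
have -> : g = (g + e *: x) - e *: x by rewrite addrK.
by apply: IM_sub => //; apply: IM_single; apply: He.
Qed.

Lemma tor_case (D : idomainType) (M : lmodType D) :
  dedekind_domain D -> finitely_generated M -> multiplication_module M ->
  (forall x : M, exists a, a != 0 /\ a *: x = 0) ->
  exists I : D -> Prop, nonzero_ideal I /\ iso_to_quotient M I.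
Proof.
move=> [HN _ Hdim] [s Hs] HM tor.
pose A (r : D) := forall m : M, r *: m = 0.
have HA : is_ideal A.
  split.
  - by move=> m; rewrite scale0r.
  - by move=> a b Ha Hb m; rewrite scalerDl Ha Hb addr0.
  - by move=> r a Ha m; rewrite -scalerA Ha scaler0.
have [a0 [a0n Aa0]] : exists a, a != 0 /\ A a.
  suff [a [an Ha]] : exists a, a != 0 /\ forall y, y \in s -> a *: y = 0.
    by exists a; split => //; apply: (kill_gen Hs).
  elim: (s) => [|y l [a [an Ha]]]; first by exists 1; rewrite oner_eq0.
  have [b [bn Hb]] := tor y.
  exists (b * a); split; first by rewrite mulf_neq0.
  move=> z; rewrite in_cons => /orP [/eqP -> | hz].
    by rewrite mulrC -scalerA Hb scaler0.
  by rewrite -scalerA Ha ?scaler0.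
have [L [CA1 CA2 _]] := prime_cover HN HA.
have Lmax : forall P, List.In P L -> is_maximal_ideal P.
  move=> P h; have [Pp PA] := CA1 P h; apply: Hdim => //.
  by exists a0; split => //; apply: PA.
have [g Hg] : exists g : M, forall P, List.In P L -> ~ ideal_times_module P g.
  apply: gcons => P h; split; first exact: Lmax.
  have [Pp PA] := CA1 P h.
  by apply: (nak HM Pp Hs) => r Ar; apply: PA.
have [I [HI HIc]] := mult_cyc g HM.
pose B (x : D) := exists i a, I i /\ A a /\ x = i + a.
have HB : is_ideal B.
  split.
  - by exists 0, 0; split; [case: HI | split; [case: HA | rewrite addr0]].
  - move=> x y [i [a [Ii [Aa ->]]]] [j [b [Ij [Ab ->]]]].
    exists (i + j), (a + b); split; first by case: HI => _ HD _; apply: HD.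
    split; first by case: HA => _ HD _; apply: HD.
    by rewrite addrACA.
  - move=> r x [i [a [Ii [Aa ->]]]]; exists (r * i), (r * a); split.
      by case: HI => _ _ HM'; apply: HM'.
    split; first by case: HA => _ _ HM'; apply: HM'.
    by rewrite mulrDr.
have B1 : B 1.
  apply: NNPP => nB1.
  have [LB [CB1 _ CB3]] := prime_cover HN HB.
  have [P' HP'] := CB3 nB1.
  have [P'p P'B] := CB1 P' HP'.
  have [P [PL PP']] : exists P, List.In P L /\ forall x, P x -> P' x.
    apply: CA2 => // x Ax; apply: P'B; exists 0, x; split; first by case: HI.
    by split => //; rewrite add0r.
  have [_ _ Pmax] := Lmax P PL.
  have [HP'i P'1 _] := P'p.
  case: (Pmax P' HP'i PP') => [E|//].
  apply: (Hg P PL); apply: (IM_mono (I := I)).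
    by move=> x Ix; apply/E; apply: P'B; exists x, 0; split => //; split; [case: HA | rewrite addr0].
  by apply/HIc; exists 1; rewrite scale1r.
have gen : forall m : M, exists r, m = r *: g.
  move=> m; have [i [a [Ii [Aa E]]]] := B1.
  apply/HIc; have -> : m = i *: m by rewrite -[m in LHS]scale1r E scalerDl Aa addr0.
  exact: IM_single.
exists (fun a => a *: g = 0); split.
  split.
    split; first by rewrite scale0r.
      by move=> a b Ha Hb; rewrite scalerDl Ha Hb addr0.
    by move=> r a Ha; rewrite -scalerA Ha scaler0.
  by have [a [an Ha]] := tor g; exists a.
exists (fun a => a *: g); split => //.
- by move=> r a b; rewrite scalerDl scalerA.
- by move=> x; have [r ->] := gen x; exists r.
Qed.

Theorem mainTheorem9 (D : idomainType) (M : lmodType D) :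
  dedekind_domain D ->
  nonzero_module M -> finitely_generated M -> multiplication_module M ->
  (exists J : D -> Prop, nonzero_ideal J /\ iso_to_ideal M J) \/
  (exists I : D -> Prop, nonzero_ideal I /\ iso_to_quotient M I).
Proof.
move=> HD _ Hfg HM.
case: (classic (exists x : M, forall a, a *: x = 0 -> a = 0)) => [[x Hx]|H].
  by left; apply: (tf_case HM Hx).
right; apply: tor_case => // x; apply: NNPP => C; apply: H; exists x => a ax.
by apply: NNPP => an; apply: C; exists a; split => //; apply/eqP.
Qed.
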